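(* Consider the hard instance $G_{k,m}$ described in the context, and run Water-Filling on it. There is $k_0$ such that for all $k\ge k_0$ and all $m$, the resulting passive water-levels satisfy $p_{u_{t,i}}<1$ for all $t\in[m]$, $i\in[k]$, and $p_{v_{t,i}}<1$ for all $t\in[m-1]$, $i\in[k]$.
   Context: Fully online fractional matching model: an undirected graph is revealed online; each step is the arrival or the deadline of a vertex; at arrival, edges to previously arrived vertices are revealed; every neighbor of $v$ arrives before $v$'s deadline. The algorithm maintains $x_{uv}\ge 0$ with water-level $x_w:=\sum_{z}x_{wz}\le1$; $x_{uv}$ (with $u$ having the earlier deadline) may only be increased at $u$'s deadline. Water-Filling: at the deadline of $u$, with $N(u)$ the neighbors of $u$ whose deadlines have not been reached, while $x_u<1$ and $\min_{v\in N(u)}x_v<1$, continuously increase $x_{uv}$ at equal rates for all $v\in\arg\min_{v\in N(u)}x_v$. The passive water-level $p_w$ of a vertex $w$ is its water-level $x_w$ immediately before $w$'s deadline. Let $c=2-\sqrt2$, $f(x)=\tfrac12(\ln(1-x)+\ln(1-c+x))+\frac{1}{\sqrt2(x-1)}+\frac{2+\sqrt2-\ln(1-c)}{2}$ on $[0,c]$ (a strictly decreasing bijection onto $[0,1]$), and $h(x)=f(c-f^{-1}(x))$ for $x\in[0,1]$. Hard instance $G_{k,m}$: vertex set $\bigcup_{t\in[m]}(U_t\cup V_t)$ with $U_t=\{u_{t,1},\dots,u_{t,k}\}$, $V_t=\{v_{t,1},\dots,v_{t,k}\}$. Edges: $(u_{t,i},v_{t,j})$ for all $t\in[m]$, $i\in[k]$,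 $j\ge i$; and $(u_{t,i},u_{t+1,j})$ for all $t\in[m-1]$, $i\in[k]$, $1\le j\le\lfloor k\,h(\tfrac{i-1}{k})\rfloor$. All vertices arrive before any deadline. The deadlines of the $u$-vertices come first, in lexicographic order of $(t,i)$; afterwards the deadlines of all $v$-vertices are reached (in any order). *)

(* Defs.v *)
From Stdlib Require Import Reals Lra Lia ZArith Arith List ClassicalEpsilon.
Import ListNotations.
Open Scope bool_scope.
Open Scope R_scope.

Definition c : R := 2 - sqrt 2.

Definition f (x : R) : R :=
  / 2 * (ln (1 - x) + ln (1 - c + x)) + 1 / (sqrt 2 * (x - 1))
  + (2 + sqrt 2 - ln (1 - c)) / 2.

(* f^{-1} : [0,1] -> [0,c]; the paper states f is a strictly decreasing
   bijection [0,c] -> [0,1], so this picks the unique preimage in [0,c]. *)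
Definition finv (y : R) : R :=
  epsilon (inhabits 0) (fun x => 0 <= x <= c /\ f x = y).

Definition h (x : R) : R := f (c - finv x).

Definition nfloor (r : R) : nat := Z.to_nat (Int_part r).

(* U t i = u_{t,i},  V t i = v_{t,i}  (1-indexed: t in [1,m], i in [1,k]) *)
Inductive vtx : Type := U (t i : nat) | V (t i : nat).

Definition verts (k m : nat) : list vtx :=
  flat_map (fun t => map (U t) (seq 1 k) ++ map (V t) (seq 1 k)) (seq 1 m).

Definition inrange (a n : nat) : bool := (1 <=? a)%nat && (a <=? n)%nat.

(* directed description of the edge list of G_{k,m} *)
Definition edge (k m : nat) (a b : vtx) : bool :=
  match a, b with
  | U t i, V t' j =>
      (t =? t')%nat && inrange t m && inrange i k && inrange j k && (i <=? j)%nat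
  | U t i, U t' j =>
      (t' =? S t)%nat && inrange t (m - 1) && inrange i k && inrange j k
      && (j <=? nfloor (INR k * h ((INR i - 1) / INR k)))%nat
  | _, _ => false
  end.

Definition adj (k m : nat) (a b : vtx) : bool := edge k m a b || edge k m b a.

(** * Deadlines: the u-deadlines come first in lexicographic order of (t,i);
    deadline number s (0-based) is that of u_{s/k+1, s mod k + 1}. *)
Definition uvert (k s : nat) : vtx := U (s / k + 1) (s mod k + 1).

Definition upos (k t i : nat) : nat := ((t - 1) * k + (i - 1))%nat.

Definition not_reached (k s : nat) (w : vtx) : bool :=
  match w with
  | U t i => (s <? upos k t i)%nat
  | V _ _ => true
  end.

Definition nbrs (k m s : nat) : list vtx :=
  filter (fun w => adj k m (uvert k s) w && not_reached k s w) (verts k m).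

Definition state := vtx -> vtx -> R.

Definition lvl (VS : list vtx) (x : state) (w : vtx) : R :=
  fold_right Rplus 0 (map (x w) VS).

(* One Water-Filling step at the deadline of u with neighbour list N:
   the continuous process "raise x_{uv} at equal rates for all
   v in argmin_{v in N} x_v while x_u < 1 and min_{v in N} x_v < 1"
   ends with every v in N at level max(x_v, L) for a common level L <= 1,
   where it stopped because x_u reached 1 or all neighbours reached 1. *)
Definition wf_step (VS : list vtx) (u : vtx) (N : list vtx) (x x' : state) : Prop :=
  exists L : R, L <= 1 /\
    (forall v, In v N ->
        x' u v = x u v + Rmax 0 (L - lvl VS x v) /\
        x' v u = x v u + Rmax 0 (L - lvl VS x v)) /\
    (forall a b, ~ (a = u /\ In b N) -> ~ (b = u /\ In a N) -> x' a b = x a b) /\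
    lvl VS x' u <= 1 /\
    (lvl VS x' u = 1 \/ (forall v, In v N -> lvl VS x' v = 1)).

(* Main.v *)
Require Import Defs.
From Stdlib Require Import Reals Lra Lia ClassicalEpsilon List ZArith Arith.
From Coquelicot Require Import Coquelicot.
Require Import Defs.
Import ListNotations.
Open Scope R_scope.
Lemma sq2 : sqrt 2 * sqrt 2 = 2.
Proof. apply sqrt_sqrt; lra. Qed.
Lemma spos : 0 < sqrt 2.
Proof. apply sqrt_lt_R0; lra. Qed.
Lemma sbnd : 1.414 < sqrt 2 < 1.4143.
Proof. pose proof sq2; pose proof spos; split; nra. Qed.
Lemma cbnd : 0.5857 < c < 0.586.
Proof. pose proof sbnd; unfold c; lra. Qed.

Ltac spow H :=
  let s := match type of H with ?s * ?s = 2 => s end in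
  repeat match goal with
  | |- context [s ^ ?n] =>
     match n with
     | 0%nat => fail 1
     | 1%nat => fail 1
     | _ => replace (s ^ n) with (2 * s ^ (n - 2)) by (simpl; rewrite <- H; ring); simpl (n - 2)%nat
     end
  end.

Definition A (y : R) : R := y * (2 - y) / ((1 - y) * (1 - c + y)).

Lemma f_deriv (y : R) : 0 <= y <= c ->
  derivable_pt_lim f y (- A y / (1 - y)).
Proof.
  intros Hy. pose proof sbnd. pose proof sq2. unfold c in *.
  apply is_derive_Reals. unfold f, A, c.
  auto_derive.
  - repeat split; try lra. apply Rmult_integral_contrapositive; split; lra.
  - set (s := sqrt 2) in *.
    field_simplify_eq; [| repeat split; nra ..].
    ring_simplify. spow H0. ring.
Qed.

Lemma A_alt (y : R) : 0 <= y <= c -> A y = 1 + (/ (1 - y) - / (1 - c + y)) / sqrt 2.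
Proof.
  intros Hy. pose proof sbnd. pose proof sq2. unfold A, c in *. set (s := sqrt 2) in *.
  field_simplify_eq; [| repeat split; nra ..]. ring_simplify. spow H0. ring.
Qed.

Lemma A_nonneg (y : R) : 0 <= y <= c -> 0 <= A y.
Proof.
  intros Hy. pose proof cbnd. unfold A. apply Rmult_le_pos.
  - nra.
  - apply Rlt_le, Rinv_0_lt_compat. nra.
Qed.

Lemma A_ge (y : R) : 0 <= y <= c -> 2 * y <= A y.
Proof.
  intros Hy. pose proof cbnd. pose proof sbnd.
  assert (Hd : 0 < (1 - y) * (1 - c + y)) by nra.
  assert (HA : A y * ((1 - y) * (1 - c + y)) = y * (2 - y)) by (unfold A; field; split; lra).
  assert (HD : (1 - y) * (1 - c + y) <= / 2).
  { pose proof (pow2_ge_0 ((1 - y) - (1 - c + y))). unfold c in *. pose proof sq2. nra. }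
  assert (A y * ((1 - y) * (1 - c + y)) >= 2 * y * ((1 - y) * (1 - c + y))) by nra.
  nra.
Qed.

Lemma A_mono (p q : R) : 0 <= p -> p <= q -> q <= c -> A p <= A q.
Proof.
  intros H1 H2 H3. pose proof cbnd. pose proof spos.
  rewrite !A_alt by lra.
  apply Rplus_le_compat_l. unfold Rdiv. apply Rmult_le_compat_r.
  - left; apply Rinv_0_lt_compat; lra.
  - assert (/ (1 - p) <= / (1 - q)) by (apply Rinv_le_contravar; lra).
    assert (/ (1 - c + q) <= / (1 - c + p)) by (apply Rinv_le_contravar; lra).
    lra.
Qed.

Lemma f_mono (a b : R) : 0 <= a -> a <= b -> b <= c -> f b <= f a.
Proof.
  intros H1 H2 H3. pose proof cbnd. destruct (Req_dec a b) as [->|Hab]; [lra|].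
  destruct (MVT_cor2 f (fun y => - A y / (1 - y)) a b) as [x [Hx1 Hx2]].
  - lra.
  - intros x Hx. apply f_deriv. lra.
  - assert (0 <= A x) by (apply A_nonneg; lra).
    assert (0 <= A x / (1 - x)) by (apply Rmult_le_pos; [lra| left; apply Rinv_0_lt_compat; lra]).
    assert (- A x / (1 - x) * (b - a) <= 0).
    { unfold Rdiv in *. nra. }
    lra.
Qed.

Lemma f0 : f 0 = 1.
Proof.
  pose proof sq2. pose proof sbnd. unfold f. rewrite Rminus_0_r, Rplus_0_r, ln_1.
  unfold c. set (s := sqrt 2) in *. field_simplify_eq; [|nra]. ring_simplify. spow H. ring.
Qed.

Lemma fc : f c = 0.
Proof.
  pose proof sq2. pose proof sbnd. unfold f.
  replace (1 - c + c) with 1 by ring. rewrite ln_1.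
  unfold c. set (s := sqrt 2) in *. field_simplify_eq; [|nra]. ring_simplify. spow H. ring.
Qed.

Lemma f_c_minus (y : R) : 0 <= y <= c -> f (c - y) = f y + A y - 1.
Proof.
  intros Hy. pose proof sq2. pose proof sbnd. unfold f, A.
  replace (1 - (c - y)) with (1 - c + y) by ring.
  replace (1 - c + (c - y)) with (1 - y) by ring.
  unfold c in *. set (s := sqrt 2) in *.
  field_simplify_eq; [| repeat split; nra ..]. ring_simplify. spow H. ring.
Qed.

Lemma ln_ge (x : R) : 0 < x -> 1 - / x <= ln x.
Proof.
  intros Hx. destruct (Req_dec (ln x) 0) as [E|E].
  - rewrite E. assert (x = 1). { rewrite <- (exp_ln x Hx), E, exp_0. reflexivity. }
    subst. lra.
  - pose proof (exp_ineq1 (- ln x) ltac:(lra)).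
    rewrite exp_Ropp, exp_ln in H by exact Hx. lra.
Qed.

Lemma f_low (y : R) : 0 <= y <= c -> 1 - f y <= 8 * y ^ 2.
Proof.
  intros Hy. pose proof sq2. pose proof sbnd. pose proof cbnd.
  assert (E1 : - y / (1 - y) <= ln (1 - y)).
  { pose proof (ln_ge (1 - y) ltac:(lra)).
    replace (- y / (1 - y)) with (1 - / (1 - y)) by (field; lra). exact H2. }
  assert (E2 : y / (1 - c + y) <= ln (1 - c + y) - ln (1 - c)).
  { rewrite <- ln_div by lra. pose proof (ln_ge ((1 - c + y) / (1 - c)) ltac:(apply Rdiv_lt_0_compat; lra)).
    replace (y / (1 - c + y)) with (1 - / ((1 - c + y) / (1 - c))) by (field; lra). exact H2. }
  assert (Hf : 1 - f y <= y ^ 2 * ((/ 2 + / sqrt 2) * / (1 - y) + / 2 * / (1 - c) * / (1 - c + y))).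
  { unfold f.
    assert (Hid : 1 - (/ 2 * (- y / (1 - y) + y / (1 - c + y)) + 1 / (sqrt 2 * (y - 1)) + (2 + sqrt 2) / 2)
      = y ^ 2 * ((/ 2 + / sqrt 2) * / (1 - y) + / 2 * / (1 - c) * / (1 - c + y))).
    { unfold c in *. set (s := sqrt 2) in *. field_simplify_eq; [| repeat split; nra ..].
      ring_simplify. spow H. ring. }
    rewrite <- Hid. lra. }
  assert (B1 : / (1 - y) <= / (1 - c)) by (apply Rinv_le_contravar; lra).
  assert (B2 : / (1 - c + y) <= / (1 - c)) by (apply Rinv_le_contravar; lra).
  assert (B3 : / (1 - c) <= 2.5).
  { replace 2.5 with (/ / 2.5) by (field; lra). apply Rinv_le_contravar; lra. }
  assert (B4 : / sqrt 2 <= 0.71).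
  { replace 0.71 with (/ / 0.71) by (field; lra). apply Rinv_le_contravar; lra. }
  assert (P1 : 0 <= / (1 - y)) by (left; apply Rinv_0_lt_compat; lra).
  assert (P2 : 0 <= / (1 - c + y)) by (left; apply Rinv_0_lt_compat; lra).
  assert (P3 : 0 <= / sqrt 2) by (left; apply Rinv_0_lt_compat; lra).
  assert (P4 : 0 <= / (1 - c)) by (left; apply Rinv_0_lt_compat; lra).
  assert ((/ 2 + / sqrt 2) * / (1 - y) + / 2 * / (1 - c) * / (1 - c + y) <= 8) by nra.
  pose proof (pow2_ge_0 y). nra.
Qed.

Lemma key (a b : R) : 0 <= a <= c -> 0 < b <= c ->
  (f a - f b) / A b <= ln (1 - a) - ln (1 - b).
Proof.
  intros Ha Hb. pose proof cbnd.
  assert (HAb : 0 < A b) by (pose proof (A_ge b ltac:(lra)); lra).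
  set (phi := fun t => ln (1 - t) - / A b * f t).
  set (phi' := fun t => - / (1 - t) - / A b * (- A t / (1 - t))).
  assert (D : forall t, 0 <= t <= c -> derivable_pt_lim phi t (phi' t)).
  { intros t Ht. unfold phi, phi'.
    apply (derivable_pt_lim_minus (fun t => ln (1 - t)) (fun t => / A b * f t)).
    - apply is_derive_Reals. auto_derive; [lra|]. field. lra.
    - apply (derivable_pt_lim_scal f). apply f_deriv; exact Ht. }
  assert (Hphi : phi b <= phi a).
  { destruct (Rtotal_order a b) as [Hlt|[Heq|Hgt]].
    - destruct (MVT_cor2 phi phi' a b Hlt) as [x [Hx1 Hx2]].
      + intros t Ht; apply D; lra.
      + assert (A x <= A b) by (apply A_mono; lra).
        assert (phi' x <= 0).
        { unfold phi'. assert (0 < 1 - x) by lra.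
          replace (- / (1 - x) - / A b * (- A x / (1 - x))) with ((A x - A b) / (A b * (1 - x))) by (field; lra).
          apply Rmult_le_0_r; [lra|]. left. apply Rinv_0_lt_compat. nra. }
        nra.
    - subst; lra.
    - destruct (MVT_cor2 phi phi' b a Hgt) as [x [Hx1 Hx2]].
      + intros t Ht; apply D; lra.
      + assert (A b <= A x) by (apply A_mono; lra).
        assert (0 <= phi' x).
        { unfold phi'. assert (0 < 1 - x) by lra.
          replace (- / (1 - x) - / A b * (- A x / (1 - x))) with ((A x - A b) / (A b * (1 - x))) by (field; lra).
          apply Rmult_le_pos; [lra|]. left. apply Rinv_0_lt_compat. nra. }
        nra. }
  unfold phi in Hphi. unfold Rdiv. lra.
Qed.

Lemma finv_spec (x : R) : 0 <= x < 1 -> 0 <= finv x <= c /\ f (finv x) = x.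
Proof.
  intros Hx. pose proof cbnd. unfold finv. apply epsilon_spec.
  destruct (Req_dec x 0) as [->|Hx0].
  - exists c. split; [lra| apply fc].
  - destruct (Ranalysis5.IVT_interv (fun t => x - f t) 0 c) as [z [Hz1 Hz2]].
    + intros a Ha. apply continuity_pt_minus. apply continuity_pt_const. intros u v; reflexivity.
      apply derivable_continuous_pt. exists (- A a / (1 - a)). apply f_deriv. exact Ha.
    + lra.
    + rewrite f0; lra.
    + rewrite fc; lra.
    + exists z. split; [exact Hz1| lra].
Qed.

Lemma lnbound : - ln (1 - c) < 0.96.
Proof.
  pose proof sbnd. pose proof sq2.
  assert (E : 1 - c = / (sqrt 2 + 1)) by (unfold c; field_simplify_eq; [nra| lra]).
  rewrite E, ln_Rinv by lra. rewrite Ropp_involutive.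
  pose proof (exp_ge_taylor 0.96 4 ltac:(lra)).
  simpl in H1. unfold Factorial.fact in H1; simpl in H1.
  rewrite <- (ln_exp 0.96). apply ln_increasing; lra.
Qed.

Fixpoint Ssum (g : nat -> R) (n : nat) : R :=
  match n with O => 0 | S n' => Ssum g n' + g (S n') end.

Definition Fk (k i : nat) : nat := nfloor (INR k * h ((INR i - 1) / INR k)).
Definition Dk (k i : nat) : nat := (k - i + 1 + Nat.min k (Fk k i))%nat.

Lemma INR_toZ (n : Z) : (0 <= n)%Z -> INR (Z.to_nat n) = IZR n.
Proof. intros H. rewrite INR_IZR_INZ, Z2Nat.id; auto. Qed.

Lemma toZ_neg (n : Z) : (n < 0)%Z -> Z.to_nat n = 0%nat.
Proof. destruct n; simpl; lia. Qed.

Lemma nfloor_gt (z : R) : z - 1 < INR (nfloor z).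
Proof.
  unfold nfloor. pose proof (base_Int_part z).
  destruct (Z_le_gt_dec 0 (Int_part z)).
  - rewrite INR_toZ by auto. lra.
  - rewrite toZ_neg by lia. simpl.
    assert (IZR (Int_part z) <= -1) by (apply IZR_le; lia). lra.
Qed.

Lemma nfloor_le (z : R) (k : nat) : z <= INR k -> (nfloor z <= k)%nat.
Proof.
  intros Hz. unfold nfloor. pose proof (base_Int_part z).
  destruct (Z_le_gt_dec 0 (Int_part z)).
  - apply INR_le. rewrite INR_toZ by auto. lra.
  - rewrite toZ_neg by lia. lia.
Qed.

Definition K0 : nat := (60 * 100)%nat.

Lemma K0R : INR K0 = 6000.
Proof. unfold K0. rewrite mult_INR, !INR_IZR_INZ. simpl. lra. Qed.

Definition Yk (k i : nat) : R := finv ((INR i - 1) / INR k).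

Lemma x_range (k i : nat) : (1 <= i <= k)%nat ->
  0 <= (INR i - 1) / INR k /\ (INR i - 1) / INR k <= 1 - / INR k.
Proof.
  intros Hi. assert (Hk : 0 < INR k) by (apply lt_0_INR; lia).
  assert (1 <= INR i) by (apply (le_INR 1); lia).
  assert (INR i <= INR k) by (apply le_INR; lia).
  split.
  - apply Rdiv_le_0_compat; lra.
  - replace (1 - / INR k) with ((INR k - 1) / INR k) by (field; lra).
    unfold Rdiv. apply Rmult_le_compat_r; [left; apply Rinv_0_lt_compat; lra| lra].
Qed.

Lemma Y_spec (k i : nat) : (1 <= i <= k)%nat ->
  0 <= Yk k i <= c /\ f (Yk k i) = (INR i - 1) / INR k.
Proof.
  intros Hi. destruct (x_range k i Hi). assert (Hk : 0 < INR k) by (apply lt_0_INR; lia).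
  apply finv_spec. split; auto. assert (0 < / INR k) by (apply Rinv_0_lt_compat; lra). lra.
Qed.

Lemma Y_big (k i : nat) : (K0 <= k)%nat -> (1 <= i <= k)%nat ->
  51 <= INR k * A (Yk k i) /\ 0 < Yk k i.
Proof.
  intros Hk Hi. destruct (Y_spec k i Hi) as [Hy Hf]. destruct (x_range k i Hi) as [_ Hx].
  assert (HK : 6000 <= INR k) by (rewrite <- K0R; apply le_INR; lia).
  pose proof (f_low _ Hy). pose proof (A_ge _ Hy).
  set (y := Yk k i) in *.
  assert (Hyy : / INR k <= 8 * y ^ 2) by lra.
  assert (Hyy' : 1 <= 8 * INR k * y ^ 2).
  { apply Rmult_le_compat_l with (r := INR k) in Hyy; [|lra].
    rewrite Rinv_r in Hyy by lra. lra. }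
  assert (51 <= 2 * INR k * y) by nra.
  split; nra.
Qed.

Lemma D_low (k i : nat) : (K0 <= k)%nat -> (1 <= i <= k)%nat ->
  INR k * A (Yk k i) - 1 < INR (Dk k i).
Proof.
  intros Hk Hi. destruct (Y_spec k i Hi) as [Hy Hf].
  assert (HK : 0 < INR k) by (apply lt_0_INR; lia).
  assert (Hh : h ((INR i - 1) / INR k) = (INR i - 1) / INR k + A (Yk k i) - 1).
  { unfold h. fold (Yk k i). rewrite f_c_minus by exact Hy. rewrite Hf. ring. }
  assert (Hh1 : h ((INR i - 1) / INR k) <= 1).
  { unfold h. fold (Yk k i). rewrite <- f0. apply f_mono; lra. }
  assert (HF : (Fk k i <= k)%nat).
  { unfold Fk. apply nfloor_le. apply Rle_trans with (INR k * 1); [|lra].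
    apply Rmult_le_compat_l; lra. }
  unfold Dk. rewrite Nat.min_r by exact HF.
  rewrite !plus_INR, minus_INR by lia. simpl (INR 1).
  pose proof (nfloor_gt (INR k * h ((INR i - 1) / INR k))). fold (Fk k i) in H.
  rewrite Hh in H.
  replace (INR k * ((INR i - 1) / INR k + A (Yk k i) - 1)) with (INR i - 1 + INR k * A (Yk k i) - INR k) in H
    by (field; lra).
  lra.
Qed.

Lemma term_bound (k i : nat) : (K0 <= k)%nat -> (1 <= i <= k)%nat ->
  / INR (Dk k i) <= 51 / 50 * / (INR k * A (Yk k i)).
Proof.
  intros Hk Hi. pose proof (D_low k i Hk Hi). destruct (Y_big k i Hk Hi) as [H1 _].
  set (a := INR k * A (Yk k i)) in *.
  apply Rle_trans with (/ (a - 1)).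
  - apply Rinv_le_contravar; lra.
  - replace (51 / 50 * / a) with (/ (a * 50 / 51)) by (field; lra).
    apply Rinv_le_contravar; lra.
Qed.

Lemma tele_step (k i : nat) : (K0 <= k)%nat -> (1 <= i)%nat -> (i + 1 <= k)%nat ->
  / (INR k * A (Yk k i)) <= ln (1 - Yk k (S i)) - ln (1 - Yk k i).
Proof.
  intros Hk Hi Hik. destruct (Y_spec k i ltac:(lia)) as [Hy Hf].
  destruct (Y_spec k (S i) ltac:(lia)) as [Hy' Hf'].
  destruct (Y_big k i Hk ltac:(lia)) as [_ Hpos].
  assert (HK : 0 < INR k) by (apply lt_0_INR; lia).
  assert (HA : 0 < A (Yk k i)) by (pose proof (A_ge _ Hy); lra).
  pose proof (key (Yk k (S i)) (Yk k i) Hy' ltac:(lra)).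
  rewrite Hf, Hf', S_INR in H.
  replace ((INR i + 1 - 1) / INR k - (INR i - 1) / INR k) with (/ INR k) in H by (field; lra).
  replace (/ (INR k * A (Yk k i))) with (/ INR k / A (Yk k i)) by (field; lra). exact H.
Qed.

Lemma tele_sum (k n : nat) : (K0 <= k)%nat -> (n + 1 <= k)%nat ->
  Ssum (fun i => / (INR k * A (Yk k i))) n <= ln (1 - Yk k (S n)) - ln (1 - Yk k 1).
Proof.
  intros Hk. induction n as [|n IH]; intros Hn.
  - simpl. lra.
  - simpl Ssum. pose proof (IH ltac:(lia)). pose proof (tele_step k (S n) Hk ltac:(lia) ltac:(lia)). lra.
Qed.

Lemma sum_cmp (g1 g2 : nat -> R) (n : nat) :
  (forall i, (1 <= i <= n)%nat -> g1 i <= g2 i) -> Ssum g1 n <= Ssum g2 n.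
Proof.
  induction n; intros H; simpl; [lra|].
  pose proof (IHn (fun i Hi => H i ltac:(lia))). pose proof (H (S n) ltac:(lia)). lra.
Qed.

Lemma Ssum_scal (g : nat -> R) (a : R) (n : nat) : Ssum (fun i => a * g i) n = a * Ssum g n.
Proof. induction n; simpl; [ring| rewrite IHn; ring]. Qed.

Theorem sumB (k : nat) : (K0 <= k)%nat -> Ssum (fun i => / INR (Dk k i)) k < 1.
Proof.
  intros Hk.
  apply Rle_lt_trans with (51 / 50 * Ssum (fun i => / (INR k * A (Yk k i))) k).
  { rewrite <- Ssum_scal. apply sum_cmp. intros i Hi. apply term_bound; auto. }
  destruct k as [|k']; [exfalso; unfold K0 in Hk; lia|].
  cbn [Ssum].
  pose proof (tele_sum (S k') k' Hk ltac:(lia)).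
  destruct (Y_big (S k') (S k') Hk ltac:(lia)) as [HB _].
  destruct (Y_spec (S k') (S k') ltac:(lia)) as [HyK _].
  destruct (Y_spec (S k') 1 ltac:(lia)) as [Hy1 _].
  pose proof cbnd.
  assert (ln (1 - Yk (S k') (S k')) <= 0).
  { rewrite <- ln_1. apply ln_le; lra. }
  assert (- ln (1 - Yk (S k') 1) <= - ln (1 - c)).
  { apply Ropp_le_contravar. apply ln_le; lra. }
  pose proof lnbound.
  assert (/ (INR (S k') * A (Yk (S k') (S k'))) <= / 51).
  { apply Rinv_le_contravar; lra. }
  lra.
Qed.

Definition sumR (l : list vtx) (g : vtx -> R) : R := fold_right Rplus 0 (map g l).

Lemma vtx_eq_dec (a b : vtx) : {a = b} + {a <> b}.
Proof. decide equality; apply Nat.eq_dec. Qed.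

Lemma sumR_nonneg l g : (forall z, 0 <= g z) -> 0 <= sumR l g.
Proof. intros H; induction l; unfold sumR in *; simpl; [lra| pose proof (H a); lra]. Qed.

Lemma sumR_filter_le (P : vtx -> bool) l g : (forall z, 0 <= g z) ->
  sumR (filter P l) g <= sumR l g.
Proof.
  intros H; induction l as [|a l IH]; unfold sumR in *; simpl; [lra|].
  destruct (P a); simpl; pose proof (H a); lra.
Qed.

Lemma sumR_le l g1 g2 : (forall z, In z l -> g1 z <= g2 z) -> sumR l g1 <= sumR l g2.
Proof.
  induction l as [|a l IH]; intros H; unfold sumR in *; simpl; [lra|].
  pose proof (H a (or_introl eq_refl)). pose proof (IH (fun z Hz => H z (or_intror Hz))).
  lra.
Qed.

Lemma sumR_len l g a : (forall z, In z l -> a <= g z) -> INR (length l) * a <= sumR l g.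
Proof.
  induction l as [|b l IH]; intros H; simpl length; [unfold sumR; simpl; lra|].
  rewrite S_INR. pose proof (H b (or_introl eq_refl)). pose proof (IH (fun z Hz => H z (or_intror Hz))).
  unfold sumR in *. simpl. lra.
Qed.

Lemma sumR_ext l g1 g2 : (forall z, In z l -> g1 z = g2 z) -> sumR l g1 = sumR l g2.
Proof.
  induction l as [|a l IH]; intros H; unfold sumR in *; simpl; [lra|].
  rewrite (H a (or_introl eq_refl)), (IH (fun z Hz => H z (or_intror Hz))). reflexivity.
Qed.

Lemma sumR_point l g1 g2 u : NoDup l -> In u l -> (forall z, z <> u -> g2 z = g1 z) ->
  sumR l g2 = sumR l g1 + (g2 u - g1 u).
Proof.
  induction l as [|a l IH]; intros Hn Hu H; [destruct Hu|].
  apply NoDup_cons_iff in Hn as [Hna Hn].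
  change (sumR (a::l) g2) with (g2 a + sumR l g2). change (sumR (a::l) g1) with (g1 a + sumR l g1).
  destruct Hu as [->|Hu].
  - rewrite (sumR_ext l g2 g1); [lra|].
    intros z Hz. apply H. intros ->. contradiction.
  - rewrite (IH Hn Hu H). rewrite (H a); [lra|]. intros ->; contradiction.
Qed.

Lemma NoDup_map_inj {A B : Type} (g : A -> B) (l : list A) :
  (forall a b, g a = g b -> a = b) -> NoDup l -> NoDup (map g l).
Proof.
  intros Hi Hn; induction Hn; simpl; constructor; auto.
  intros Hin. apply in_map_iff in Hin as [y [Hy Hy']]. apply Hi in Hy. subst; contradiction.
Qed.

Lemma NoDup_flat_map {A B : Type} (g : A -> list B) (l : list A) :
  NoDup l -> (forall a, NoDup (g a)) -> (forall a b w, In w (g a) -> In w (g b) -> a = b) ->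
  NoDup (flat_map g l).
Proof.
  intros Hn Hg Hd; induction Hn as [|a l Ha Hn IH]; simpl; [constructor|].
  apply NoDup_app; auto. intros w Hw Hw'. apply in_flat_map in Hw' as [b [Hb Hwb]].
  pose proof (Hd a b w Hw Hwb). subst; contradiction.
Qed.

Lemma in_verts k m w : In w (verts k m) <->
  match w with U t i | V t i => (1 <= t <= m)%nat /\ (1 <= i <= k)%nat end.
Proof.
  unfold verts. rewrite in_flat_map. split.
  - intros [t [Ht Hw]]. apply in_seq in Ht. apply in_app_iff in Hw as [Hw|Hw];
    apply in_map_iff in Hw as [j [<- Hj]]; apply in_seq in Hj; lia.
  - destruct w as [t i|t i]; intros [Ht Hi]; exists t; split; try (apply in_seq; lia);
    apply in_app_iff; [left|right]; apply in_map_iff; exists i; split; auto; apply in_seq; lia.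
Qed.

Lemma verts_NoDup k m : NoDup (verts k m).
Proof.
  apply NoDup_flat_map; [apply seq_NoDup| |].
  - intros t. apply NoDup_app.
    + apply NoDup_map_inj; [intros a b H; injection H; auto| apply seq_NoDup].
    + apply NoDup_map_inj; [intros a b H; injection H; auto| apply seq_NoDup].
    + intros w H1 H2. apply in_map_iff in H1 as [? [<- _]]. apply in_map_iff in H2 as [? [? _]]. discriminate.
  - intros a b w H1 H2. apply in_app_iff in H1, H2.
    destruct H1 as [H1|H1]; apply in_map_iff in H1 as [? [<- _]];
    destruct H2 as [H2|H2]; apply in_map_iff in H2 as [? [H2 _]]; congruence.
Qed.

Lemma lvl_sumR VS x w : lvl VS x w = sumR VS (x w).
Proof. reflexivity. Qed.

Section Step.
Variables (VS : list vtx) (P : vtx -> bool) (u : vtx) (x x' : state).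
Hypothesis HVS : NoDup VS.
Hypothesis HuVS : In u VS.
Hypothesis HuN : ~ In u (filter P VS).
Hypothesis Hnn : forall a b, 0 <= x a b.
Hypothesis Hst : wf_step VS u (filter P VS) x x'.

Lemma step_nonneg : forall a b, 0 <= x' a b.
Proof.
  destruct Hst as [L [HL [Hin [Hoth _]]]]. intros a b.
  destruct (classic (a = u /\ In b (filter P VS))) as [[-> Hb]|H1].
  - rewrite (proj1 (Hin b Hb)). pose proof (Hnn u b). pose proof (Rmax_l 0 (L - lvl VS x b)). lra.
  - destruct (classic (b = u /\ In a (filter P VS))) as [[-> Ha]|H2].
    + rewrite (proj2 (Hin a Ha)). pose proof (Hnn a u). pose proof (Rmax_l 0 (L - lvl VS x a)). lra.
    + rewrite (Hoth a b H1 H2). apply Hnn.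
Qed.

Lemma step_untouched : forall w, w <> u -> ~ In w (filter P VS) -> forall z, x' w z = x w z.
Proof.
  destruct Hst as [L [HL [Hin [Hoth _]]]]. intros w Hw HwN z.
  apply Hoth; intros [H1 H2]; contradiction.
Qed.

Lemma step_bound : forall M, (forall v, In v (filter P VS) -> lvl VS x v <= M) ->
  forall v, In v (filter P VS) -> lvl VS x' v <= M + / INR (length (filter P VS)).
Proof.
  pose proof step_nonneg as Hnn'.
  destruct Hst as [L [HL [Hin [Hoth [Hu1 _]]]]]. intros M HM v Hv.
  set (N := filter P VS) in *.
  assert (Hvu : v <> u) by (intros ->; contradiction).
  assert (HvVS : In v VS) by (apply filter_In in Hv; tauto).
  assert (Hlen : (0 < length N)%nat) by (destruct N; [destruct Hv| simpl; lia]).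
  assert (Hlen' : 0 < INR (length N)) by (apply lt_0_INR; exact Hlen).
  assert (Hlv : lvl VS x' v = lvl VS x v + Rmax 0 (L - lvl VS x v)).
  { rewrite !lvl_sumR. rewrite (sumR_point VS (x v) (x' v) u HVS HuVS).
    - rewrite (proj2 (Hin v Hv)). rewrite lvl_sumR. ring.
    - intros z Hz. apply Hoth; intros [H1 H2]; contradiction. }
  assert (HLM : L <= M + / INR (length N)).
  { destruct (Rle_dec L M) as [HLe|HLt].
    - assert (0 < / INR (length N)) by (apply Rinv_0_lt_compat; lra). lra.
    - assert (S1 : INR (length N) * (L - M) <= sumR N (fun z => Rmax 0 (L - lvl VS x z))).
      { apply sumR_len. intros z Hz. pose proof (HM z Hz). pose proof (Rmax_r 0 (L - lvl VS x z)). lra. }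
      assert (S2 : sumR N (fun z => Rmax 0 (L - lvl VS x z)) <= sumR N (x' u)).
      { apply sumR_le. intros z Hz. rewrite (proj1 (Hin z Hz)). pose proof (Hnn u z). lra. }
      assert (S3 : sumR N (x' u) <= lvl VS x' u).
      { rewrite lvl_sumR. apply sumR_filter_le. apply Hnn'. }
      assert (INR (length N) * (L - M) <= 1) by lra.
      apply Rmult_le_reg_l with (INR (length N)); [lra|].
      rewrite Rmult_plus_distr_l, Rinv_r by lra. lra. }
  rewrite Hlv. pose proof (HM v Hv).
  assert (0 < / INR (length N)) by (apply Rinv_0_lt_compat; lra).
  destruct (Rle_dec L (lvl VS x v)).
  - rewrite Rmax_left by lra. lra.
  - rewrite Rmax_right by lra. lra.
Qed.
End Step.

Definition inR (t : nat) (w : vtx) : Prop :=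
  match w with V t' _ => t' = t | U t' _ => t' = S t end.

Ltac bprop := repeat (rewrite ?Bool.orb_true_iff, ?Bool.andb_true_iff, ?Nat.eqb_eq, ?Nat.leb_le, ?Nat.ltb_lt in *).

Lemma upos_div k t i : (0 < k)%nat -> (1 <= t)%nat -> (1 <= i <= k)%nat ->
  (upos k t i / k = t - 1 /\ upos k t i mod k = i - 1)%nat.
Proof.
  intros Hk Ht Hi. unfold upos. split.
  - symmetry. apply (Nat.div_unique _ _ _ (i - 1)); lia.
  - symmetry. apply (Nat.mod_unique _ _ (t - 1)); lia.
Qed.

Lemma uvert_upos k t i : (0 < k)%nat -> (1 <= t)%nat -> (1 <= i <= k)%nat ->
  uvert k (upos k t i) = U t i.
Proof.
  intros Hk Ht Hi. destruct (upos_div k t i Hk Ht Hi) as [H1 H2].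
  unfold uvert. rewrite H1, H2. f_equal; lia.
Qed.

Lemma nbrs_spec k m s w : In w (nbrs k m s) <->
  In w (verts k m) /\ adj k m (uvert k s) w = true /\ not_reached k s w = true.
Proof. unfold nbrs. rewrite filter_In, Bool.andb_true_iff. tauto. Qed.

Lemma nbrs_inR k m s w : (0 < k)%nat -> In w (nbrs k m s) -> inR (s / k + 1) w.
Proof.
  intros Hk Hw. apply nbrs_spec in Hw as [Hv [Ha Hn]].
  pose proof (Nat.div_mod_eq s k) as Hs. pose proof (Nat.mod_upper_bound s k ltac:(lia)) as Hr.
  set (q := (s / k)%nat) in *. set (r := (s mod k)%nat) in *.
  unfold uvert in Ha. fold q r in Ha.
  destruct w as [t' j|t' j]; simpl.
  - unfold adj, edge, inrange, not_reached, upos in *. bprop.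
    destruct Ha as [Ha|Ha]; [lia|]. exfalso. nia.
  - unfold adj, edge, inrange in Ha. bprop. destruct Ha as [Ha|Ha]; [lia| discriminate].
Qed.

Lemma len_nbrs k m t i : (0 < k)%nat -> (1 <= t <= m - 1)%nat -> (1 <= i <= k)%nat ->
  (Dk k i <= length (nbrs k m (upos k t i)))%nat.
Proof.
  intros Hk Ht Hi.
  set (l' := map (V t) (seq i (k - i + 1)) ++ map (U (S t)) (seq 1 (Nat.min k (Fk k i)))).
  assert (Hl : length l' = Dk k i).
  { unfold l', Dk. rewrite length_app, !length_map, !length_seq. reflexivity. }
  rewrite <- Hl. apply NoDup_incl_length.
  - unfold l'. apply NoDup_app.
    + apply NoDup_map_inj; [intros a b H; injection H; auto| apply seq_NoDup].
    + apply NoDup_map_inj; [intros a b H; injection H; auto| apply seq_NoDup].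
    + intros w H1 H2. apply in_map_iff in H1 as [? [<- _]]. apply in_map_iff in H2 as [? [? _]]. discriminate.
  - intros w Hw. apply nbrs_spec. rewrite uvert_upos by lia.
    unfold l' in Hw. apply in_app_iff in Hw as [Hw|Hw]; apply in_map_iff in Hw as [j [<- Hj]];
      apply in_seq in Hj.
    + split; [apply in_verts; lia|]. unfold adj, edge, inrange, not_reached. bprop. split; [left; lia| reflexivity].
    + split; [apply in_verts; lia|]. unfold Fk in Hj. unfold adj, edge, inrange, not_reached, upos. bprop.
      split; [left; lia| nia].
Qed.

Lemma sumR_zero l : sumR l (fun _ => 0) = 0.
Proof. induction l; unfold sumR in *; simpl; [reflexivity| rewrite IHl; ring]. Qed.

Section Global.
Variables (k m : nat) (X : nat -> state).
Hypothesis Hk : (0 < k)%nat.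
Hypothesis HX0 : X 0%nat = (fun _ _ => 0).
Hypothesis Hstep : forall s : nat, (s < m * k)%nat ->
  wf_step (verts k m) (uvert k s) (nbrs k m s) (X s) (X (S s)).

Definition Pn (s : nat) : vtx -> bool := fun w => adj k m (uvert k s) w && not_reached k s w.

Lemma nbrs_filter s : nbrs k m s = filter (Pn s) (verts k m).
Proof. reflexivity. Qed.

Lemma div_lt s : (s < m * k)%nat -> (s / k < m)%nat.
Proof. intros H. apply Nat.Div0.div_lt_upper_bound. lia. Qed.

Lemma uvert_in s : (s < m * k)%nat -> In (uvert k s) (verts k m).
Proof.
  intros H. apply in_verts. unfold uvert. pose proof (div_lt s H).
  pose proof (Nat.mod_upper_bound s k ltac:(lia)). lia.
Qed.

Lemma uvert_notN s : ~ In (uvert k s) (nbrs k m s).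
Proof. intros H. apply nbrs_inR in H; [|exact Hk]. unfold uvert, inR in H. lia. Qed.

Lemma X_nonneg : forall s, (s <= m * k)%nat -> forall a b, 0 <= X s a b.
Proof.
  induction s as [|s IH]; intros Hs a b.
  - rewrite HX0. lra.
  - pose proof (Hstep s ltac:(lia)) as H. rewrite nbrs_filter in H.
    apply (step_nonneg (verts k m) (Pn s) (uvert k s) (X s) (X (S s))); auto.
    apply IH; lia.
Qed.

Lemma X_unchanged w s1 : forall s2v, (s1 <= s2v <= m * k)%nat ->
  (forall s, (s1 <= s < s2v)%nat -> uvert k s <> w /\ ~ In w (nbrs k m s)) ->
  forall z, X s2v w z = X s1 w z.
Proof.
  induction s2v as [|s2v IH]; intros Hs Hu z.
  - assert (s1 = 0%nat) by lia. subst. reflexivity.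
  - destruct (Nat.eq_dec s1 (S s2v)) as [->|Hne]; [reflexivity|].
    pose proof (Hstep s2v ltac:(lia)) as H. rewrite nbrs_filter in H.
    destruct (Hu s2v ltac:(lia)) as [H1 H2].
    rewrite (step_untouched (verts k m) (Pn s2v) (uvert k s2v) (X s2v) (X (S s2v)) H).
    + apply IH; [lia|]. intros s Hs'. apply Hu. lia.
    + auto.
    + rewrite <- nbrs_filter. exact H2.
Qed.

Lemma lvl_unchanged w s1 s2v : (s1 <= s2v <= m * k)%nat ->
  (forall s, (s1 <= s < s2v)%nat -> uvert k s <> w /\ ~ In w (nbrs k m s)) ->
  lvl (verts k m) (X s2v) w = lvl (verts k m) (X s1) w.
Proof.
  intros H1 H2. rewrite !lvl_sumR. apply sumR_ext. intros z _. apply X_unchanged; auto.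
Qed.

Lemma untouched_of s w : (s / k + 1 <> S (s / k + 1))%nat ->
  ~ inR (s / k + 1) w -> (forall j, w <> U (s / k + 1) j) -> uvert k s <> w /\ ~ In w (nbrs k m s).
Proof.
  intros _ H1 H2. split.
  - unfold uvert. intros E. apply (H2 (s mod k + 1)%nat). auto.
  - intros H. apply H1. apply (nbrs_inR k m); auto.
Qed.

Let g := fun j => / INR (Dk k j).

Lemma row_inv t : (1 <= t <= m - 1)%nat -> forall i, (i <= k)%nat ->
  forall w, inR t w -> lvl (verts k m) (X ((t - 1) * k + i)%nat) w <= Ssum g i.
Proof.
  intros Ht. induction i as [|i IH]; intros Hi w Hw.
  - rewrite Nat.add_0_r.
    rewrite (lvl_unchanged w 0 ((t - 1) * k)); [| nia |].
    + rewrite HX0. unfold lvl. simpl. fold (sumR (verts k m) (fun _ => 0)). rewrite sumR_zero. lra.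
    + intros s Hs. assert (Hq : (s / k < t - 1)%nat) by (apply Nat.Div0.div_lt_upper_bound; nia).
      apply untouched_of; [lia| |].
      * intros Hw'. destruct w; simpl in *; lia.
      * intros j ->. simpl in Hw. lia.
  - assert (Hs : ((t - 1) * k + i)%nat = upos k t (S i)) by (unfold upos; lia).
    assert (Hsm : ((t - 1) * k + i < m * k)%nat) by nia.
    destruct (upos_div k t (S i) Hk ltac:(lia) ltac:(lia)) as [Hq _].
    rewrite <- Hs in Hq.
    replace ((t - 1) * k + S i)%nat with (S ((t - 1) * k + i)) by lia.
    set (s := ((t - 1) * k + i)%nat) in *.
    pose proof (Hstep s Hsm) as H. rewrite nbrs_filter in H.
    assert (HD1 : (1 <= Dk k (S i))%nat) by (unfold Dk; lia).
    assert (HD : 0 < INR (Dk k (S i))) by (apply lt_0_INR; lia).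
    assert (Hg : 0 < g (S i)) by (unfold g; apply Rinv_0_lt_compat; lra).
    cbn [Ssum].
    destruct (in_dec vtx_eq_dec w (nbrs k m s)) as [Hin|Hout].
    + rewrite nbrs_filter in Hin.
      pose proof (step_bound (verts k m) (Pn s) (uvert k s) (X s) (X (S s)) (verts_NoDup k m)
        (uvert_in s Hsm) ltac:(rewrite <- nbrs_filter; apply uvert_notN)
        (X_nonneg s ltac:(lia)) H (Ssum g i)) as SB.
      assert (HM : forall v, In v (filter (Pn s) (verts k m)) -> lvl (verts k m) (X s) v <= Ssum g i).
      { intros v Hv. rewrite <- nbrs_filter in Hv. apply nbrs_inR in Hv; [|exact Hk].
        rewrite Hq in Hv. replace (t - 1 + 1)%nat with t in Hv by lia. apply IH; auto; lia. }
      specialize (SB HM w Hin). rewrite <- nbrs_filter in SB.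
      assert (Hlen := len_nbrs k m t (S i) Hk Ht ltac:(lia)). rewrite <- Hs in Hlen. fold s in Hlen.
      assert (/ INR (length (nbrs k m s)) <= g (S i)).
      { unfold g. apply Rinv_le_contravar; [lra| apply le_INR; exact Hlen]. }
      lra.
    + rewrite (lvl_unchanged w s (S s)); [| lia |].
      * pose proof (IH ltac:(lia) w Hw). lra.
      * intros s' Hs'. assert (s' = s) by lia. subst s'. split; [|exact Hout].
        unfold uvert. rewrite Hq. intros E. subst w. simpl in Hw. lia.
Qed.
End Global.

Lemma div_range k t s : (0 < k)%nat -> ((t - 1) * k <= s < (t - 1) * k + k)%nat ->
  (s / k = t - 1 /\ s mod k = s - (t - 1) * k)%nat.
Proof.
  intros Hk Hs. split.
  - symmetry. apply (Nat.div_unique _ _ _ (s - (t - 1) * k)); lia.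
  - symmetry. apply (Nat.mod_unique _ _ (t - 1)); lia.
Qed.

Lemma untouched2 k m s w : (0 < k)%nat -> uvert k s <> w -> ~ inR (s / k + 1) w ->
  uvert k s <> w /\ ~ In w (nbrs k m s).
Proof. intros Hk H1 H2. split; auto. intros H. apply H2. apply (nbrs_inR k m); auto. Qed.


Theorem lemma3p3 :
  exists k0 : nat, forall k m : nat, (k0 <= k)%nat ->
  forall X : nat -> state,
    X 0%nat = (fun _ _ => 0) ->
    (forall s : nat, (s < m * k)%nat ->
       wf_step (verts k m) (uvert k s) (nbrs k m s) (X s) (X (S s))) ->
    (forall t i : nat, (1 <= t <= m)%nat -> (1 <= i <= k)%nat ->
       lvl (verts k m) (X (upos k t i)) (U t i) < 1) /\
    (forall t i : nat, (1 <= t <= m - 1)%nat -> (1 <= i <= k)%nat ->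
       lvl (verts k m) (X (m * k)%nat) (V t i) < 1).
Proof.
  exists K0. intros k m Hk0 X HX0 Hstep.
  assert (Hk : (0 < k)%nat) by (unfold K0 in Hk0; lia).
  pose proof (sumB k Hk0) as HB.
  split.
  - intros t i Ht Hi.
    destruct (Nat.eq_dec t 1) as [->|Ht1].
    + rewrite (lvl_unchanged k m X Hk Hstep (U 1 i) 0 (upos k 1 i)).
      * rewrite HX0. unfold lvl. simpl. fold (sumR (verts k m) (fun _ => 0)). rewrite sumR_zero. lra.
      * unfold upos. nia.
      * intros s Hs. unfold upos in Hs.
        destruct (div_range k 1 s Hk ltac:(lia)) as [E1 E2].
        apply untouched2; auto.
        -- unfold uvert. rewrite E1, E2. intros E. injection E. lia.
        -- rewrite E1. simpl. lia.
    + pose proof (row_inv k m X Hk HX0 Hstep (t - 1) ltac:(lia) k (le_n k) (U t i) ltac:(simpl; lia)) as R.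
      rewrite (lvl_unchanged k m X Hk Hstep (U t i) ((t - 1 - 1) * k + k) (upos k t i)).
      * fold (Ssum (fun j => / INR (Dk k j)) k) in R. lra.
      * unfold upos. nia.
      * intros s Hs. unfold upos in Hs.
        assert (E0 : ((t - 1 - 1) * k + k = (t - 1) * k)%nat) by nia.
        rewrite E0 in Hs.
        destruct (div_range k t s Hk ltac:(lia)) as [E1 E2].
        apply untouched2; auto.
        -- unfold uvert. rewrite E1, E2. intros E. injection E. lia.
        -- rewrite E1. simpl. lia.
  - intros t i Ht Hi.
    pose proof (row_inv k m X Hk HX0 Hstep t Ht k (le_n k) (V t i) eq_refl) as R.
    rewrite (lvl_unchanged k m X Hk Hstep (V t i) ((t - 1) * k + k) (m * k)).
    + fold (Ssum (fun j => / INR (Dk k j)) k) in R. lra.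
    + nia.
    + intros s Hs. apply untouched2; auto.
      * unfold uvert. discriminate.
      * simpl. assert (t <= s / k)%nat.
        { apply Nat.div_le_lower_bound; [lia| nia]. }
        lia.
Qed.
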